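(* Let $\nu\ge0$, $\Psi_\nu(x)=I_{\nu+1}(x)/I_\nu(x)$ and $$\lambda_\nu(x)=\frac{\log\left(1-\frac{2}{x}\Psi_\nu(x)\right)}{\log\Psi_\nu(x)}.$$ Then $$\lim_{x\to\infty}\lambda_\nu(x)=\frac{4}{2\nu+1}.$$
   Context: $I_\nu$ denotes the modified Bessel function of the first kind of order $\nu$. *)

(* Defs.v *)
From Stdlib Require Import Reals.
From Coquelicot Require Import Coquelicot.
Open Scope R_scope.

Definition Gamma (s : R) : R :=
  RInt_gen (fun t => Rpower t (s - 1) * exp (- t))
           (at_right 0) (Rbar_locally p_infty).

Definition BesselI (nu x : R) : R :=
  Series (fun k : nat =>
    Rpower (x / 2) (2 * INR k + nu) / (INR (Factorial.fact k) * Gamma (INR k + nu + 1))).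

Definition Psi (nu x : R) : R := BesselI (nu + 1) x / BesselI nu x.

Definition lambda (nu x : R) : R :=
  ln (1 - (2 / x) * Psi nu x) / ln (Psi nu x).

(* Main.v *)
Require Import Defs.
From Stdlib Require Import Reals Lra Lia.
From Coquelicot Require Import Coquelicot.
Open Scope R_scope.


Lemma ln_le_m1 (y : R) : 0 < y -> ln y <= y - 1.
Proof.
  intros Hy. rewrite <- (ln_exp (y - 1)). apply ln_le; auto.
  pose proof (exp_ineq1_le (y-1)). lra.
Qed.

Lemma ln_le_2sqrt (t : R) : 0 < t -> ln t <= 2 * sqrt t.
Proof.
  intros Ht. pose proof (sqrt_lt_R0 t Ht) as Hs.
  replace t with (sqrt t * sqrt t) at 1 by (apply sqrt_sqrt; lra).
  rewrite ln_mult by lra. pose proof (ln_le_m1 _ Hs). lra.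
Qed.

Lemma exp_le_exp x y : x <= y -> exp x <= exp y.
Proof. intros [H|H]. left; apply exp_increasing; auto. subst; lra. Qed.

Definition gf (s t : R) : R := Rpower t (s - 1) * exp (- t).

Lemma gf_pos s t : 0 < gf s t.
Proof. unfold gf, Rpower. apply Rmult_lt_0_compat; apply exp_pos. Qed.

Lemma Rpower_derive (a t : R) : 0 < t -> is_derive (fun x => Rpower x a) t (a * Rpower t (a - 1)).
Proof.
  intros Ht. apply is_derive_Reals. apply derivable_pt_lim_power; auto.
Qed.

Lemma deriv_eq (f : R -> R) x l l' : is_derive f x l -> l = l' -> is_derive f x l'.
Proof. intros H ->; exact H. Qed.

Lemma gf_cont s t : 0 < t -> continuous (gf s) t.
Proof.
  intros Ht. apply (ex_derive_continuous (gf s)).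
  unfold gf. apply ex_derive_mult.
  - eexists. apply Rpower_derive; auto.
  - auto_derive; auto.
Qed.

Lemma ex_RInt_gf s a b : 0 < a -> 0 < b -> ex_RInt (gf s) a b.
Proof.
  intros Ha Hb. apply (@ex_RInt_continuous R_CompleteNormedModule). intros z Hz.
  apply gf_cont. destruct Hz as [Hz _]. unfold Rmin in Hz. destruct (Rle_dec a b); lra.
Qed.

Lemma gf_bound s t : 1 <= s -> 0 < t -> gf s t <= exp (2 * (s-1)^2) * exp (- t / 2).
Proof.
  intros Hs Ht. unfold gf, Rpower. rewrite <- !exp_plus. apply exp_le_exp.
  pose proof (ln_le_2sqrt t Ht). pose proof (sqrt_sqrt t (Rlt_le _ _ Ht)).
  pose proof (sqrt_pos t).
  assert ((s-1) * ln t <= (s-1) * (2 * sqrt t)) by (apply Rmult_le_compat_l; lra).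
  pose proof (pow2_ge_0 (sqrt t - 2 * (s-1))). nra.
Qed.

Lemma RInt_expm2 a b : is_RInt (fun t => exp (- t / 2)) a b (2 * exp (- a / 2) - 2 * exp (- b / 2)).
Proof.
  replace (2 * exp (- a / 2) - 2 * exp (- b / 2)) with
    (minus ((fun t => -2 * exp (- t / 2)) b) ((fun t => -2 * exp (- t / 2)) a))
    by (unfold minus, plus, opp; simpl; ring).
  apply (@is_RInt_derive R_CompleteNormedModule (fun t => -2 * exp (- t / 2))).
  - intros x _. auto_derive; [auto | unfold Rdiv; field].
  - intros x _. apply (ex_derive_continuous (fun t => exp (- t / 2))). auto_derive; auto.
Qed.

Lemma RInt_gf_bound s a b : 1 <= s -> 0 < a -> a <= b ->
  RInt (gf s) a b <= 2 * exp (2 * (s-1)^2).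
Proof.
  intros Hs Ha Hab.
  pose proof (RInt_expm2 a b) as H1.
  pose proof (is_RInt_scal _ _ _ (exp (2 * (s-1)^2)) _ H1) as H2.
  apply Rle_trans with (scal (exp (2 * (s - 1) ^ 2)) (2 * exp (- a / 2) - 2 * exp (- b / 2))).
  - refine (is_RInt_le (gf s) _ a b _ _ Hab _ H2 _).
    + apply (@RInt_correct R_CompleteNormedModule). apply ex_RInt_gf; lra.
    + intros x Hx. apply gf_bound; lra.
  - pose proof (exp_pos (2 * (s-1)^2)).
    set (C := exp (2 * (s-1)^2)) in *.
    unfold scal; simpl; unfold mult; simpl. pose proof (exp_pos (- b / 2)).
    assert (exp (- a / 2) <= 1). { rewrite <- exp_0. apply exp_le_exp. lra. }
    nra.
Qed.

Lemma RInt_gf_mono s a b a' b' : 0 < a' -> a' <= a -> a <= b -> b <= b' ->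
  RInt (gf s) a b <= RInt (gf s) a' b'.
Proof.
  intros H1 H2 H3 H4.
  rewrite <- (RInt_Chasles (gf s) a' a b') by (apply ex_RInt_gf; lra).
  rewrite <- (RInt_Chasles (gf s) a b b') by (apply ex_RInt_gf; lra).
  unfold plus; simpl.
  assert (0 <= RInt (gf s) a' a).
  { apply RInt_ge_0; auto. apply ex_RInt_gf; lra. intros; apply Rlt_le, gf_pos. }
  assert (0 <= RInt (gf s) b b').
  { apply RInt_ge_0; auto. apply ex_RInt_gf; lra. intros; apply Rlt_le, gf_pos. }
  lra.
Qed.


Definition useq (s : R) (n : nat) : R := RInt (gf s) (/ (INR n + 1)) (INR n + 1).

Lemma inv_n_pos n : 0 < / (INR n + 1).
Proof. apply Rinv_0_lt_compat. pose proof (pos_INR n). lra. Qed.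

Lemma useq_incr s n : useq s n <= useq s (S n).
Proof.
  unfold useq. rewrite S_INR. pose proof (pos_INR n).
  apply RInt_gf_mono.
  - apply Rinv_0_lt_compat; lra.
  - apply Rinv_le_contravar; lra.
  - assert (/ (INR n + 1) <= 1). { rewrite <- Rinv_1. apply Rinv_le_contravar; lra. } lra.
  - lra.
Qed.

Lemma useq_lim s : 1 <= s -> exists l : R, is_lim_seq (useq s) l.
Proof.
  intros Hs. assert (H : ex_finite_lim_seq (useq s)).
  2:{ destruct H as [l Hl]; exists l; exact Hl. }
  apply (ex_finite_lim_seq_incr _ (2 * exp (2 * (s-1)^2))).
  - apply useq_incr.
  - intros n. unfold useq. pose proof (pos_INR n). apply RInt_gf_bound; auto.
    apply inv_n_pos.
    assert (/ (INR n + 1) <= 1). { rewrite <- Rinv_1. apply Rinv_le_contravar; lra. } lra.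
Qed.

Lemma small_inv (a : R) : 0 < a -> exists M : nat, / (INR M + 1) <= a.
Proof.
  intros Ha. destruct (INR_unbounded (/ a)) as [M HM]. exists M.
  rewrite <- (Rinv_inv a). apply Rinv_le_contravar. apply Rinv_0_lt_compat; auto. lra.
Qed.

Lemma useq_approx s (l : R) : 1 <= s -> is_lim_seq (useq s) l ->
  forall eps, 0 < eps -> exists N : nat, forall a b, 0 < a -> a <= / (INR N + 1) -> INR N + 1 <= b ->
    Rabs (RInt (gf s) a b - l) < eps.
Proof.
  intros Hs Hl eps He.
  pose proof Hl as Hl'. apply is_lim_seq_spec in Hl. unfold is_lim_seq' in Hl. destruct (Hl (mkposreal eps He)) as [N HN]. simpl in HN.
  exists N. intros a b Ha HaN HbN.
  pose proof (pos_INR N).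
  assert (H1 : useq s N <= RInt (gf s) a b).
  { unfold useq. apply RInt_gf_mono; auto.
    assert (/ (INR N + 1) <= 1). { rewrite <- Rinv_1. apply Rinv_le_contravar; lra. } lra. }
  destruct (small_inv a Ha) as [M1 HM1].
  destruct (INR_unbounded b) as [M2 HM2].
  set (M := max M1 M2).
  assert (H2 : RInt (gf s) a b <= useq s M).
  { unfold useq. apply RInt_gf_mono; auto. apply inv_n_pos.
    - apply Rle_trans with (/ (INR M1 + 1)); auto. apply Rinv_le_contravar.
      pose proof (pos_INR M1); lra. apply Rplus_le_compat_r, le_INR. apply Nat.le_max_l.
    - assert (/ (INR N + 1) <= 1). { rewrite <- Rinv_1. apply Rinv_le_contravar; lra. } lra.
    - assert (INR M2 <= INR M) by (apply le_INR, Nat.le_max_r). lra. }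
  pose proof (is_lim_seq_incr_compare _ _ Hl' (useq_incr s) M) as H3.
  specialize (HN N (le_n N)).
  apply Rabs_def1; apply Rabs_def2 in HN; lra.
Qed.

Lemma Gamma_eq s (l : R) : 1 <= s -> is_lim_seq (useq s) l -> Gamma s = l.
Proof.
  intros Hs Hl. unfold Gamma.
  change (fun t : R => Rpower t (s - 1) * exp (- t)) with (gf s).
  apply (@is_RInt_gen_unique R_CompleteNormedModule).
  - apply Proper_StrongProper, at_right_proper_filter.
  - apply Proper_StrongProper, Rbar_locally_filter.
  - unfold is_RInt_gen. apply (proj2 (filterlimi_locally (F := filter_prod (at_right 0) (Rbar_locally p_infty)) _ _)).
    + intros eps. destruct (useq_approx s l Hs Hl eps (cond_pos eps)) as [N HN].
      apply (Filter_prod _ _ _ (fun a => 0 < a <= / (INR N + 1)) (fun b => INR N + 1 < b)).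
      * exists (mkposreal _ (inv_n_pos N)). intros y Hy Hy0.
        unfold ball in Hy; simpl in Hy; unfold AbsRing_ball, abs, minus, plus, opp in Hy; simpl in Hy.
        apply Rabs_def2 in Hy. lra.
      * exists (INR N + 1). auto.
      * intros a b [Ha1 Ha2] Hb. simpl. exists (RInt (gf s) a b). split.
        -- apply (@RInt_correct R_CompleteNormedModule). apply ex_RInt_gf; pose proof (pos_INR N); lra.
        -- unfold ball; simpl; unfold AbsRing_ball, abs, minus, plus, opp; simpl.
           apply HN; lra.
Qed.

Lemma Gamma_approx s : 1 <= s -> forall eps, 0 < eps -> exists N : nat,
  forall a b, 0 < a -> a <= / (INR N + 1) -> INR N + 1 <= b ->
    Rabs (RInt (gf s) a b - Gamma s) < eps.
Proof.
  intros Hs. destruct (useq_lim s Hs) as [l Hl].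
  rewrite (Gamma_eq s l Hs Hl). apply useq_approx; auto.
Qed.

Lemma Gamma_pos s : 1 <= s -> 0 < Gamma s.
Proof.
  intros Hs. destruct (useq_lim s Hs) as [l Hl].
  rewrite (Gamma_eq s l Hs Hl).
  pose proof (is_lim_seq_incr_compare _ _ Hl (useq_incr s) 1) as H.
  apply Rlt_le_trans with (useq s 1); auto.
  unfold useq. simpl INR.
  apply Rlt_le_trans with (RInt (gf s) 1 2).
  2:{ assert (0 < / (1 + 1)) by (apply Rinv_0_lt_compat; lra).
      assert (/ (1+1) <= 1).
      { pose proof (Rinv_le_contravar 1 (1+1) ltac:(lra) ltac:(lra)) as HH. rewrite Rinv_1 in HH. exact HH. }
      apply RInt_gf_mono; lra. }
  apply Rlt_le_trans with (scal (2 - 1) (exp (-2))).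
  { unfold scal; simpl; unfold mult; simpl. pose proof (exp_pos (-2)). lra. }
  apply (is_RInt_le (fun _ => exp (-2)) (gf s) 1 2); try lra.
  - apply (@is_RInt_const R_NormedModule).
  - apply (@RInt_correct R_CompleteNormedModule). apply ex_RInt_gf; lra.
  - intros x Hx. unfold gf.
    rewrite <- (Rmult_1_l (exp (-2))). apply Rmult_le_compat; try lra.
    + left. apply exp_pos.
    + unfold Rpower. apply Rle_trans with (exp 0); [rewrite exp_0; lra|]. apply exp_le_exp.
      assert (0 <= ln x). { rewrite <- ln_1. apply ln_le; lra. }
      apply Rmult_le_pos; lra.
    + apply exp_le_exp. lra.
Qed.

Lemma ex_gf s t : 0 < t -> ex_derive (gf s) t.
Proof.
  intros Ht. unfold gf. apply ex_derive_mult.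
  - eexists. apply Rpower_derive; auto.
  - auto_derive; auto.
Qed.

Lemma gfS_derive s t : 0 < t ->
  is_derive (fun x => - (Rpower x s * exp (- x))) t (gf (s+1) t - s * gf s t).
Proof.
  intros Ht.
  assert (H : is_derive (fun x => Rpower x s * exp (- x)) t
     (s * Rpower t (s - 1) * exp (- t) + Rpower t s * (- exp (- t)))).
  { eapply deriv_eq.
    apply (is_derive_mult (fun x => Rpower x s) (fun x => exp (- x))).
    - apply Rpower_derive; auto.
    - auto_derive; auto.
    - intros; apply Rmult_comm.
    - simpl. unfold plus, mult; simpl. ring. }
  eapply deriv_eq. apply (is_derive_opp _ _ _ H).
  unfold opp; simpl. unfold gf. replace (s + 1 - 1) with s by ring. ring.
Qed.

Lemma ibp s a b : 0 < a -> 0 < b ->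
  RInt (gf (s+1)) a b = (Rpower a s * exp (- a) - Rpower b s * exp (- b)) + s * RInt (gf s) a b.
Proof.
  intros Ha Hb.
  assert (H1 : is_RInt (fun t => gf (s+1) t - s * gf s t) a b
      (minus ((fun x => - (Rpower x s * exp (- x))) b) ((fun x => - (Rpower x s * exp (- x))) a))).
  { apply (@is_RInt_derive R_CompleteNormedModule (fun x => - (Rpower x s * exp (- x)))).
    - intros x Hx. apply gfS_derive.
      assert (0 < Rmin a b) by (unfold Rmin; destruct (Rle_dec a b); lra). lra.
    - intros x Hx. assert (0 < x) by (assert (0 < Rmin a b) by (unfold Rmin; destruct (Rle_dec a b); lra); lra).
      apply (ex_derive_continuous (fun t => gf (s+1) t - s * gf s t)).
      apply (ex_derive_minus (gf (s+1)) (fun t => s * gf s t)).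
      + apply ex_gf; auto.
      + apply (ex_derive_scal (gf s)). apply ex_gf; auto. }
  assert (H2 : is_RInt (fun t => s * gf s t) a b (scal s (RInt (gf s) a b))).
  { apply (@is_RInt_scal R_NormedModule (gf s)).
    apply (@RInt_correct R_CompleteNormedModule). apply ex_RInt_gf; auto. }
  pose proof (is_RInt_plus _ _ _ _ _ _ H1 H2) as H3.
  assert (H4 : is_RInt (gf (s+1)) a b (plus (minus ((fun x => - (Rpower x s * exp (- x))) b) ((fun x => - (Rpower x s * exp (- x))) a)) (scal s (RInt (gf s) a b)))).
  { eapply is_RInt_ext; [|exact H3]. intros x _. unfold plus; simpl. ring. }
  rewrite (is_RInt_unique _ _ _ _ H4). unfold plus, minus, opp, scal; simpl. unfold plus, mult, opp; simpl. ring.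
Qed.

Lemma Rpower_small a s : 0 < a -> a <= 1 -> 1 <= s -> Rpower a s * exp (- a) <= a.
Proof.
  intros Ha Ha1 Hs.
  assert (ln a <= 0). { rewrite <- ln_1. apply ln_le; lra. }
  assert (Rpower a s <= a).
  { unfold Rpower. rewrite <- (exp_ln a) at 2 by lra. apply exp_le_exp. nra. }
  assert (exp (- a) <= 1). { rewrite <- exp_0. apply exp_le_exp. lra. }
  assert (0 < Rpower a s) by (unfold Rpower; apply exp_pos).
  nra.
Qed.

Lemma exp_half_bound b : 0 <= b -> exp (- b / 2) * (1 + b / 2) <= 1.
Proof.
  intros Hb. pose proof (exp_ineq1_le (b/2)).
  assert (exp (- b / 2) * exp (b / 2) = 1).
  { rewrite <- exp_plus. replace (- b / 2 + b / 2) with 0 by field. apply exp_0. }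
  pose proof (exp_pos (- b / 2)). nra.
Qed.

Lemma Rpower_large b s : 0 < b -> 1 <= s ->
  Rpower b s * exp (- b) <= exp (2 * s ^ 2) * exp (- b / 2).
Proof.
  intros Hb Hs. pose proof (gf_bound (s+1) b ltac:(lra) Hb) as H.
  unfold gf in H. replace (s + 1 - 1) with s in H by ring. exact H.
Qed.

Lemma abs_le_b x e : Rabs x <= e -> - e <= x <= e.
Proof. intros H. pose proof (Rle_abs x). pose proof (Rle_abs (-x)). rewrite Rabs_Ropp in *. lra. Qed.

Lemma small_eps (d : R) : (forall eps, 0 < eps -> Rabs d < eps) -> d = 0.
Proof.
  intros H. destruct (Req_dec d 0) as [|Hn]; auto.
  pose proof (Rabs_pos_lt d Hn). specialize (H _ H0). lra.
Qed.

Lemma Gamma_rec s : 1 <= s -> Gamma (s + 1) = s * Gamma s.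
Proof.
  intros Hs. apply Rminus_diag_uniq. apply small_eps. intros e He.
  set (eps := e / 4).
  assert (Heps : 0 < eps) by (unfold eps; lra).
  destruct (Gamma_approx (s+1) ltac:(lra) eps Heps) as [N1 HN1].
  destruct (Gamma_approx s Hs (eps / s) ltac:(apply Rdiv_lt_0_compat; lra)) as [N2 HN2].
  set (N := max N1 N2).
  pose proof (pos_INR N) as HNp.
  assert (HN1N : INR N1 <= INR N) by (apply le_INR, Nat.le_max_l).
  assert (HN2N : INR N2 <= INR N) by (apply le_INR, Nat.le_max_r).
  set (a := Rmin (/ (INR N + 1)) eps).
  assert (Ha0 : 0 < a) by (unfold a; apply Rmin_pos; [apply inv_n_pos | lra]).
  assert (HaN : a <= / (INR N + 1)) by apply Rmin_l.
  assert (Hae : a <= eps) by apply Rmin_r.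
  assert (HN1' : / (INR N + 1) <= / (INR N1 + 1)).
  { apply Rinv_le_contravar; pose proof (pos_INR N1); lra. }
  assert (HN2' : / (INR N + 1) <= / (INR N2 + 1)).
  { apply Rinv_le_contravar; pose proof (pos_INR N2); lra. }
  assert (Hinv1 : / (INR N + 1) <= 1).
  { pose proof (Rinv_le_contravar 1 (INR N+1) ltac:(lra) ltac:(lra)) as HH. rewrite Rinv_1 in HH. exact HH. }
  set (C := exp (2 * s ^ 2)).
  assert (HC : 0 < C) by apply exp_pos.
  set (b := INR N + 1 + 2 * C / eps).
  assert (HCe : 2 * C / eps >= 0). { left. apply Rdiv_lt_0_compat; lra. }
  assert (Hb1 : INR N + 1 <= b) by (unfold b; lra).
  assert (Hbe : eps * b >= 2 * C).
  { unfold b. replace (eps * (INR N + 1 + 2 * C / eps)) with (eps * (INR N + 1) + 2 * C) by (field; lra). nra. }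
  specialize (HN1 a b Ha0 ltac:(lra) ltac:(lra)).
  specialize (HN2 a b Ha0 ltac:(lra) ltac:(lra)).
  pose proof (ibp s a b Ha0 ltac:(lra)) as Hibp.
  pose proof (Rpower_small a s Ha0 ltac:(lra) Hs) as Hsm.
  pose proof (Rpower_large b s ltac:(lra) Hs) as Hlg. fold C in Hlg.
  pose proof (exp_half_bound b ltac:(lra)) as Hhb.
  pose proof (exp_pos (- b / 2)) as Hep.
  assert (HFb : Rpower b s * exp (- b) <= eps).
  { apply Rle_trans with (C * exp (- b / 2)); auto. nra. }
  assert (0 < Rpower a s * exp (- a)) by (apply Rmult_lt_0_compat; [unfold Rpower|]; apply exp_pos).
  assert (0 < Rpower b s * exp (- b)) by (apply Rmult_lt_0_compat; [unfold Rpower|]; apply exp_pos).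
  assert (HN2s : Rabs (s * RInt (gf s) a b - s * Gamma s) <= eps).
  { rewrite <- Rmult_minus_distr_l, Rabs_mult, Rabs_right by lra.
    apply Rle_trans with (s * (eps / s)). apply Rmult_le_compat_l; lra.
    right; field; lra. }
  apply Rabs_def2 in HN1. apply Rabs_def1; apply abs_le_b in HN2s; unfold eps in *; lra.
Qed.


Definition cc (mu : R) (k : nat) : R := / (INR (Factorial.fact k) * Gamma (INR k + mu + 1)).

Lemma fact_pos k : 0 < INR (Factorial.fact k).
Proof. apply lt_0_INR. apply Factorial.lt_O_fact. Qed.

Lemma cc_pos mu k : 0 <= mu -> 0 < cc mu k.
Proof.
  intros Hm. unfold cc. apply Rinv_0_lt_compat. apply Rmult_lt_0_compat.
  apply fact_pos. apply Gamma_pos. pose proof (pos_INR k). lra.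
Qed.

Lemma cc_succ_mu mu k : 0 <= mu -> cc (mu + 1) k = cc mu k / (INR k + mu + 1).
Proof.
  intros Hm. unfold cc. pose proof (pos_INR k).
  replace (INR k + (mu + 1) + 1) with ((INR k + mu + 1) + 1) by ring.
  rewrite Gamma_rec by lra.
  pose proof (fact_pos k). pose proof (Gamma_pos (INR k + mu + 1) ltac:(lra)).
  field. repeat split; lra.
Qed.

Lemma cc_succ_k mu k : INR (S k) * cc mu (S k) = cc (mu + 1) k.
Proof.
  unfold cc. change (Factorial.fact (S k)) with (S k * Factorial.fact k)%nat; rewrite mult_INR.
  replace (INR (S k) + mu + 1) with (INR k + (mu + 1) + 1) by (rewrite S_INR; ring).
  assert (INR (S k) <> 0) by (apply not_0_INR; discriminate).
  destruct (Req_dec (Gamma (INR k + (mu + 1) + 1)) 0) as [H0|H0].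
  - rewrite H0, !Rmult_0_r, Rinv_0. ring.
  - pose proof (fact_pos k). field. repeat split; lra.
Qed.

Lemma cc_ratio mu n : 0 <= mu -> cc mu (S n) / cc mu n = / (INR (S n) * (INR n + mu + 1)).
Proof.
  intros Hm. pose proof (cc_succ_k mu n) as H1. rewrite cc_succ_mu in H1 by auto.
  pose proof (cc_pos mu n Hm). pose proof (cc_pos mu (S n) Hm).
  pose proof (pos_INR n). assert (0 < INR (S n)) by (apply lt_0_INR; lia).
  assert (cc mu (S n) = cc mu n / (INR n + mu + 1) / INR (S n)) by (rewrite <- H1; field; lra).
  rewrite H4. field. repeat split; lra.
Qed.

Lemma cc_radius mu : 0 <= mu -> CV_radius (cc mu) = p_infty.
Proof.
  intros Hm. apply CV_radius_infinite_DAlembert.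
  - intros n. pose proof (cc_pos mu n Hm). lra.
  - apply is_lim_seq_le_le with (u := fun _ => 0) (w := fun n => / INR (S n)).
    + intros n. rewrite cc_ratio by auto. pose proof (pos_INR n).
      assert (0 < INR (S n)) by (apply lt_0_INR; lia).
      rewrite Rabs_right.
      2:{ left. apply Rinv_0_lt_compat. apply Rmult_lt_0_compat; lra. }
      split. left. apply Rinv_0_lt_compat. apply Rmult_lt_0_compat; lra.
      apply Rinv_le_contravar; [lra|]. rewrite <- (Rmult_1_r (INR (S n))) at 1.
      apply Rmult_le_compat_l; lra.
    + apply is_lim_seq_const.
    + replace (Finite 0) with (Rbar_inv p_infty) by reflexivity.
      apply is_lim_seq_inv. apply (is_lim_seq_incr_1 INR). apply is_lim_seq_INR. discriminate.
Qed.

Lemma ps_is mu z : 0 <= mu -> is_series (fun k => cc mu k * z ^ k) (PSeries (cc mu) z).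
Proof.
  intros Hm. apply (Series_correct (fun k => cc mu k * z ^ k)).
  apply ex_pseries_R. apply CV_radius_inside. rewrite cc_radius by auto. simpl. auto.
Qed.

Lemma shift_series (a : nat -> R) (l : R) : a 0%nat = 0 -> is_series (fun k => a (S k)) l -> is_series a l.
Proof.
  intros H0 H. apply (is_series_decr_1 (V := R_NormedModule)).
  match goal with |- is_series _ ?v => replace v with l end. exact H.
  rewrite H0; unfold plus, opp; simpl; ring.
Qed.

Lemma S1_is mu z : 0 <= mu ->
  is_series (fun k => INR k * (cc mu k * z ^ k)) (z * PSeries (cc (mu + 1)) z).
Proof.
  intros Hm. apply shift_series. simpl; ring.
  apply (is_series_ext (fun k => scal z (cc (mu+1) k * z ^ k))).
  - intros k. unfold scal; simpl; unfold mult; simpl. rewrite <- cc_succ_k. simpl. ring.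
  - apply (is_series_scal (V := R_NormedModule)). apply ps_is. lra.
Qed.

Lemma S2_is mu z : 0 <= mu ->
  is_series (fun k => INR k * (INR k + mu) * (cc mu k * z ^ k)) (z * PSeries (cc mu) z).
Proof.
  intros Hm. apply shift_series. simpl; ring.
  apply (is_series_ext (fun k => scal z (cc mu k * z ^ k))).
  - intros k. rewrite !S_INR. unfold scal; simpl; unfold mult; simpl.
    pose proof (cc_succ_k mu k) as H. rewrite cc_succ_mu in H by auto.
    pose proof (pos_INR k). rewrite S_INR in *.
    replace (cc mu k) with ((INR k + mu + 1) * (INR k + 1) * cc mu (S k)) by (rewrite Rmult_assoc, H; field; lra).
    ring.
  - apply (is_series_scal (V := R_NormedModule)). apply ps_is. lra.
Qed.

Lemma series_ge0 (a : nat -> R) (l : R) : is_series a l -> (forall n, 0 <= a n) -> 0 <= l.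
Proof.
  intros H Hp. rewrite <- (is_series_unique a l H).
  rewrite <- (Rmult_0_l (Series a)). rewrite <- Series_scal_l.
  apply Series_le. intros n. split; [lra|]. rewrite Rmult_0_l. apply Hp.
  exists l. exact H.
Qed.

Lemma series_pos (a : nat -> R) (l : R) : is_series a l -> (forall n, 0 <= a n) -> 0 < a 0%nat -> 0 < l.
Proof.
  intros H Hp H0.
  assert (H1 : is_series (fun k => a (S k)) (l - a 0%nat)).
  { apply (is_series_incr_1 (V := R_NormedModule)).
    match goal with |- is_series _ ?v => replace v with l end. exact H.
    unfold plus; simpl; ring. }
  pose proof (series_ge0 _ _ H1 (fun n => Hp (S n))). lra.
Qed.

Lemma PS_pos mu z : 0 <= mu -> 0 <= z -> 0 < PSeries (cc mu) z.
Proof.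
  intros Hm Hz. apply (series_pos _ _ (ps_is mu z Hm)).
  - intros n. apply Rmult_le_pos. left; apply cc_pos; auto. apply pow_le; auto.
  - simpl. rewrite Rmult_1_r. apply cc_pos; auto.
Qed.

Lemma var_ineq nu z m : 0 <= nu -> 0 <= z ->
  0 <= z * PSeries (cc nu) z - (nu + 2 * m) * (z * PSeries (cc (nu + 1)) z) + m ^ 2 * PSeries (cc nu) z.
Proof.
  intros Hn Hz.
  pose proof (S2_is nu z Hn) as H2.
  pose proof (is_series_scal (V := R_NormedModule) (nu + 2 * m) _ _ (S1_is nu z Hn)) as H1.
  pose proof (is_series_scal (V := R_NormedModule) (m ^ 2) _ _ (ps_is nu z Hn)) as H0.
  pose proof (is_series_minus _ _ _ _ H2 H1) as H3.
  pose proof (is_series_plus _ _ _ _ H3 H0) as H4.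
  apply series_ge0 in H4.
  - unfold plus, minus, opp, scal in H4; simpl in H4; unfold plus, opp, mult in H4; simpl in H4. lra.
  - intros n. unfold plus, minus, opp, scal; simpl; unfold plus, opp, mult; simpl.
    pose proof (cc_pos nu n Hn). pose proof (pow_le z n Hz).
    replace (INR n * (INR n + nu) * (cc nu n * z ^ n) + - ((nu + 2 * m) * (INR n * (cc nu n * z ^ n))) +
      m * (m * 1) * (cc nu n * z ^ n)) with ((INR n - m)^2 * (cc nu n * z ^ n)) by ring.
    apply Rmult_le_pos. apply pow2_ge_0. apply Rmult_le_pos; lra.
Qed.

Lemma jensen_ineq nu z m : 0 <= nu -> 0 <= z ->
  0 <= z * PSeries (cc (nu + 1)) z + (nu + 1) * PSeries (cc nu) z - 2 * m * PSeries (cc nu) z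
       + m ^ 2 * PSeries (cc (nu + 1)) z.
Proof.
  intros Hn Hz.
  pose proof (S1_is nu z Hn) as H1.
  pose proof (is_series_scal (V := R_NormedModule) (nu + 1 - 2 * m) _ _ (ps_is nu z Hn)) as H0.
  pose proof (is_series_scal (V := R_NormedModule) (m ^ 2) _ _ (ps_is (nu + 1) z ltac:(lra))) as H2.
  pose proof (is_series_plus _ _ _ _ H1 H0) as H3.
  pose proof (is_series_plus _ _ _ _ H3 H2) as H4.
  apply series_ge0 in H4.
  - unfold plus, minus, opp, scal in H4; simpl in H4; unfold plus, opp, mult in H4; simpl in H4. nra.
  - intros n. unfold plus, minus, opp, scal; simpl; unfold plus, opp, mult; simpl.
    pose proof (cc_pos nu n Hn). pose proof (pow_le z n Hz). pose proof (pos_INR n).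
    rewrite cc_succ_mu by auto.
    replace (INR n * (cc nu n * z ^ n) + (nu + 1 - 2 * m) * (cc nu n * z ^ n) +
       m * (m * 1) * (cc nu n / (INR n + nu + 1) * z ^ n))
      with ((INR n + nu + 1 - m)^2 / (INR n + nu + 1) * (cc nu n * z ^ n)) by (field; lra).
    apply Rmult_le_pos. apply Rmult_le_pos. apply pow2_ge_0. left; apply Rinv_0_lt_compat; lra.
    apply Rmult_le_pos; lra.
Qed.

Lemma mom1 nu z : 0 <= nu -> 0 < z ->
  nu * PSeries (cc nu) z * PSeries (cc (nu+1)) z + z * PSeries (cc (nu+1)) z ^ 2 <= PSeries (cc nu) z ^ 2.
Proof.
  intros Hn Hz. set (A := PSeries (cc nu) z). set (B := PSeries (cc (nu+1)) z).
  pose proof (PS_pos nu z Hn ltac:(lra)) as HA. pose proof (PS_pos (nu+1) z ltac:(lra) ltac:(lra)) as HB.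
  fold A in HA. fold B in HB.
  pose proof (var_ineq nu z (z * B / A) Hn ltac:(lra)) as H. fold A B in H.
  assert (E : z * A - (nu + 2 * (z * B / A)) * (z * B) + (z * B / A) ^ 2 * A = z * (A^2 - nu * A * B - z * B^2) / A)
    by (field; lra).
  rewrite E in H.
  assert (0 <= A ^ 2 - nu * A * B - z * B ^ 2).
  { apply Rmult_le_reg_l with (z / A). apply Rdiv_lt_0_compat; lra.
    rewrite Rmult_0_r. replace (z / A * (A ^ 2 - nu * A * B - z * B ^ 2)) with (z * (A ^ 2 - nu * A * B - z * B ^ 2) / A) by (field; lra). exact H. }
  lra.
Qed.

Lemma mom2 nu z : 0 <= nu -> 0 < z ->
  PSeries (cc nu) z ^ 2 <= z * PSeries (cc (nu+1)) z ^ 2 + (nu + 1) * PSeries (cc nu) z * PSeries (cc (nu+1)) z.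
Proof.
  intros Hn Hz. set (A := PSeries (cc nu) z). set (B := PSeries (cc (nu+1)) z).
  pose proof (PS_pos nu z Hn ltac:(lra)) as HA. pose proof (PS_pos (nu+1) z ltac:(lra) ltac:(lra)) as HB.
  fold A in HA. fold B in HB.
  pose proof (jensen_ineq nu z (A / B) Hn ltac:(lra)) as H. fold A B in H.
  assert (E : z * B + (nu + 1) * A - 2 * (A / B) * A + (A / B) ^ 2 * B = (z * B^2 + (nu+1) * A * B - A^2) / B)
    by (field; lra).
  rewrite E in H.
  assert (0 <= z * B^2 + (nu+1) * A * B - A^2).
  { apply Rmult_le_reg_l with (/ B). apply Rinv_0_lt_compat; lra.
    rewrite Rmult_0_r. replace (/ B * (z * B ^ 2 + (nu + 1) * A * B - A ^ 2)) with ((z * B^2 + (nu+1) * A * B - A^2) / B) by (field; lra). exact H. }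
  lra.
Qed.

Lemma S3 mu z : 0 <= mu ->
  PSeries (cc mu) z - (mu + 1) * PSeries (cc (mu + 1)) z = z * PSeries (cc (mu + 1 + 1)) z.
Proof.
  intros Hm.
  pose proof (S1_is (mu+1) z ltac:(lra)) as H1.
  pose proof (is_series_scal (V := R_NormedModule) (mu + 1) _ _ (ps_is (mu+1) z ltac:(lra))) as H0.
  pose proof (is_series_plus _ _ _ _ H1 H0) as H2.
  pose proof (ps_is mu z Hm) as H3.
  assert (E : PSeries (cc mu) z = plus (z * PSeries (cc (mu + 1 + 1)) z) (scal (mu + 1) (PSeries (cc (mu + 1)) z))).
  { apply is_series_unique. eapply is_series_ext; [|exact H2].
    intros n. simpl. unfold plus, scal; simpl; unfold mult; simpl.
    rewrite cc_succ_mu by auto. pose proof (pos_INR n). field. lra. }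
  rewrite E. unfold plus, scal; simpl; unfold mult; simpl. ring.
Qed.

Lemma PS_derive_x mu x : 0 <= mu ->
  is_derive (fun y => PSeries (cc mu) (y ^ 2 / 4)) x (x / 2 * PSeries (cc (mu + 1)) (x ^ 2 / 4)).
Proof.
  intros Hm.
  assert (H1 : is_derive (PSeries (cc mu)) (x ^ 2 / 4) (PSeries (cc (mu + 1)) (x ^ 2 / 4))).
  { rewrite <- (PSeries_ext (PS_derive (cc mu))).
    apply is_derive_PSeries. rewrite cc_radius by auto. simpl; auto.
    intros n. unfold PS_derive. apply cc_succ_k. }
  assert (H2 : is_derive (fun y : R => y ^ 2 / 4) x (x / 2)).
  { auto_derive; auto. field. }
  eapply deriv_eq. apply (is_derive_comp (PSeries (cc mu)) (fun y => y ^ 2 / 4) x _ _ H1 H2).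
  reflexivity.
Qed.

Lemma BesselI_eq mu x : 0 < x ->
  BesselI mu x = Rpower (x / 2) mu * PSeries (cc mu) (x ^ 2 / 4).
Proof.
  intros Hx. unfold BesselI, PSeries. rewrite <- Series_scal_l. apply Series_ext.
  intros k. unfold cc. rewrite Rpower_plus.
  replace (2 * INR k) with (INR (2 * k)) by (rewrite mult_INR; reflexivity).
  rewrite Rpower_pow by lra. rewrite pow_mult.
  replace ((x / 2) ^ 2) with (x ^ 2 / 4) by field.
  unfold Rdiv at 1. ring.
Qed.

Lemma Psi_eq nu x : 0 < x ->
  Psi nu x = x / 2 * PSeries (cc (nu + 1)) (x ^ 2 / 4) / PSeries (cc nu) (x ^ 2 / 4).
Proof.
  intros Hx. unfold Psi. rewrite !BesselI_eq by auto.
  rewrite Rpower_plus, Rpower_1 by lra.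
  assert (0 < Rpower (x / 2) nu) by (unfold Rpower; apply exp_pos).
  destruct (Req_dec (PSeries (cc nu) (x ^ 2 / 4)) 0) as [H0|H0].
  - rewrite H0. rewrite Rmult_0_r, !Rdiv_0_r. ring.
  - field. split; lra.
Qed.


Lemma decr_of_deriv (f df : R -> R) a b : a <= b ->
  (forall x, a <= x <= b -> is_derive f x (df x)) ->
  (forall x, a <= x <= b -> df x <= 0) -> f b <= f a.
Proof.
  intros Hab Hd Hn.
  destruct (MVT_gen f a b df) as [c [Hc E]].
  - intros x Hx. apply Hd. unfold Rmin, Rmax in Hx. destruct (Rle_dec a b); lra.
  - intros x Hx. apply continuity_pt_filterlim.
    apply (ex_derive_continuous f x). exists (df x). apply Hd.
    unfold Rmin, Rmax in Hx. destruct (Rle_dec a b); lra.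
  - assert (a <= c <= b) by (unfold Rmin, Rmax in Hc; destruct (Rle_dec a b); lra).
    specialize (Hn c H). nra.
Qed.

Lemma incr_of_deriv (f df : R -> R) a b : a <= b ->
  (forall x, a <= x <= b -> is_derive f x (df x)) ->
  (forall x, a <= x <= b -> 0 <= df x) -> f a <= f b.
Proof.
  intros Hab Hd Hn.
  destruct (MVT_gen f a b df) as [c [Hc E]].
  - intros x Hx. apply Hd. unfold Rmin, Rmax in Hx. destruct (Rle_dec a b); lra.
  - intros x Hx. apply continuity_pt_filterlim.
    apply (ex_derive_continuous f x). exists (df x). apply Hd.
    unfold Rmin, Rmax in Hx. destruct (Rle_dec a b); lra.
  - assert (a <= c <= b) by (unfold Rmin, Rmax in Hc; destruct (Rle_dec a b); lra).
    specialize (Hn c H). nra.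
Qed.

Lemma exp_neg_bound y : 0 <= y -> exp (- y) * (1 + y) <= 1.
Proof.
  intros Hy. pose proof (exp_ineq1_le y).
  assert (exp (- y) * exp y = 1) by (rewrite <- exp_plus; replace (-y + y) with 0 by ring; apply exp_0).
  pose proof (exp_pos (- y)). nra.
Qed.

Lemma ode_lim (h r : R -> R) (K : R) :
  (forall x, 0 < x -> is_derive h x (-2 * h x + r x)) ->
  (forall x, 0 < x -> Rabs (r x) <= K / x) ->
  is_lim h p_infty 0.
Proof.
  intros Hd Hr. apply is_lim_spec. intros eps.
  set (d := eps / 2). assert (Hd0 : 0 < d) by (unfold d; destruct eps; simpl; lra).
  set (X0 := 1 + Rabs K / d).
  assert (HX0 : 1 <= X0) by (unfold X0; pose proof (Rabs_pos K); assert (0 <= Rabs K / d) by (apply Rdiv_le_0_compat; lra); lra).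
  assert (Hr' : forall x, X0 <= x -> Rabs (r x) <= d).
  { intros x Hx. apply Rle_trans with (K / x). apply Hr; lra.
    apply Rle_trans with (Rabs K / x). unfold Rdiv. apply Rmult_le_compat_r.
    left; apply Rinv_0_lt_compat; lra. apply Rle_abs.
    destruct (Rabs_pos K) as [Hk|Hk].
    - apply Rle_trans with (Rabs K / (Rabs K / d)).
      + apply Rmult_le_compat_l; [lra|]. apply Rinv_le_contravar.
        apply Rdiv_lt_0_compat; lra. unfold X0 in Hx. lra.
      + right. field. split; lra.
    - rewrite <- Hk. unfold Rdiv; rewrite Rmult_0_l; lra. }
  set (C0 := Rabs (h X0) + d).
  exists (X0 + C0 / d). intros x Hx.
  assert (HC0 : 0 < C0) by (unfold C0; pose proof (Rabs_pos (h X0)); lra).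
  assert (HxX : X0 <= x) by (assert (0 <= C0 / d) by (apply Rdiv_le_0_compat; lra); lra).
  assert (Hexp : exp (- (2 * (x - X0))) * C0 <= d / 2).
  { pose proof (exp_neg_bound (2 * (x - X0)) ltac:(lra)).
    pose proof (exp_pos (- (2 * (x - X0)))).
    assert (C0 <= d / 2 * (1 + 2 * (x - X0))).
    { assert (C0 / d <= x - X0) by lra.
      assert (C0 <= d * (x - X0)). { apply (Rmult_le_compat_l d) in H1; [|lra].
        replace (d * (C0 / d)) with C0 in H1 by (field; lra). exact H1. }
      nra. }
    nra. }
  assert (E2 : exp (2 * X0) = exp (2 * x) * exp (- (2 * (x - X0)))).
  { rewrite <- exp_plus. f_equal. ring. }
  pose proof (exp_pos (2 * x)) as Hex.
  assert (U : exp (2 * x) * (h x - d / 2) <= exp (2 * X0) * (h X0 - d / 2)).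
  { apply (decr_of_deriv (fun y => exp (2 * y) * (h y - d / 2))
      (fun y => exp (2 * y) * (r y - d))); auto.
    - intros y Hy. eapply deriv_eq.
      apply (is_derive_mult (fun y => exp (2 * y)) (fun y => h y - d / 2)).
      + auto_derive; auto.
      + eapply deriv_eq. apply (is_derive_minus h (fun _ => d / 2)). apply Hd; lra.
        apply is_derive_const. unfold minus, plus, opp, zero; simpl. reflexivity.
      + intros; apply Rmult_comm.
      + simpl. unfold plus, mult, minus, opp, zero; simpl. field.
    - intros y Hy. pose proof (Hr' y ltac:(lra)). apply abs_le_b in H.
      pose proof (exp_pos (2 * y)). nra. }
  assert (L : exp (2 * X0) * (h X0 + d / 2) <= exp (2 * x) * (h x + d / 2)).
  { apply (incr_of_deriv (fun y => exp (2 * y) * (h y + d / 2))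
        (fun y => exp (2 * y) * (r y + d))); auto.
      - intros y Hy. eapply deriv_eq.
        apply (is_derive_mult (fun y => exp (2 * y)) (fun y => h y + d / 2)).
        + auto_derive; auto.
        + eapply deriv_eq. apply (is_derive_plus h (fun _ => d / 2)). apply Hd; lra.
          apply is_derive_const. reflexivity.
        + intros; apply Rmult_comm.
        + simpl. unfold plus, mult, zero; simpl. field.
      - intros y Hy. pose proof (Hr' y ltac:(lra)). apply abs_le_b in H.
        pose proof (exp_pos (2 * y)). nra. }
  rewrite E2 in U, L.
  set (e := exp (- (2 * (x - X0)))) in *.
  assert (He : 0 < e) by apply exp_pos.
  pose proof (Rabs_pos (h X0)).
  assert (A1 : h x - d / 2 <= e * (h X0 - d / 2)).
  { apply (Rmult_le_reg_l (exp (2 * x))); auto. lra. }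
  assert (A2 : e * (h X0 + d / 2) <= h x + d / 2).
  { apply (Rmult_le_reg_l (exp (2 * x))); auto. lra. }
  pose proof (Rle_abs (h X0)). pose proof (Rle_abs (- h X0)). rewrite Rabs_Ropp in *.
  unfold C0 in Hexp.
  rewrite Rminus_0_r. apply Rabs_def1; unfold d in *; destruct eps as [eps Heps]; simpl in *; nra.
Qed.


Section ODE.
Variable nu : R.
Hypothesis Hnu : 0 <= nu.

Definition PP x := PSeries (cc nu) (x ^ 2 / 4).
Definition QQ x := PSeries (cc (nu + 1)) (x ^ 2 / 4).
Definition RR x := PSeries (cc (nu + 1 + 1)) (x ^ 2 / 4).
Definition Ps x := x / 2 * QQ x / PP x.
Definition gg x := x - x * Ps x.

Lemma PP_pos x : 0 < PP x.
Proof. apply PS_pos; auto. pose proof (pow2_ge_0 x). lra. Qed.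
Lemma QQ_pos x : 0 < QQ x.
Proof. apply PS_pos; try lra. pose proof (pow2_ge_0 x). lra. Qed.

Lemma gg_derive x : 0 < x ->
  is_derive gg x (1 - x + 2 * nu * Ps x + x * Ps x ^ 2).
Proof.
  intros Hx.
  pose proof (PS_derive_x nu x Hnu) as HP. fold (PP x) in HP. change (fun y => PSeries (cc nu) (y^2/4)) with PP in HP. fold (QQ x) in HP.
  pose proof (PS_derive_x (nu+1) x ltac:(lra)) as HQ. fold (QQ x) in HQ. change (fun y => PSeries (cc (nu+1)) (y^2/4)) with QQ in HQ.
  fold (RR x) in HQ.
  pose proof (S3 nu (x ^ 2 / 4) Hnu) as H3. fold (PP x) (QQ x) (RR x) in H3.
  pose proof (PP_pos x). pose proof (QQ_pos x).
  assert (Hf : is_derive (fun y => y / 2 * QQ y) x (1 / 2 * QQ x + x / 2 * (x / 2 * RR x))).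
  { eapply deriv_eq. apply (is_derive_mult (fun y => y / 2) QQ).
    - auto_derive; auto. 
    - exact HQ.
    - intros; apply Rmult_comm.
    - simpl. unfold plus, mult; simpl. field. }
  pose proof (is_derive_div _ _ _ _ _ Hf HP ltac:(lra)) as HD.
  unfold gg, Ps.
  eapply deriv_eq.
  apply (is_derive_minus (fun y => y) (fun y => y * (y / 2 * QQ y / PP y))).
  - apply (is_derive_id (K := R_AbsRing)).
  - apply (is_derive_mult (fun y => y) (fun y => y / 2 * QQ y / PP y)).
    + apply (is_derive_id (K := R_AbsRing)).
    + exact HD.
    + intros; apply Rmult_comm.
  - unfold minus, plus, opp, mult, one; simpl.
    replace (RR x) with ((PP x - (nu + 1) * QQ x) / (x ^ 2 / 4)) by (rewrite H3; field; lra).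
    lazymatch goal with |- ?a = ?b => change (@eq R a b) end. field. lra.
Qed.

Lemma Ps_pos x : 0 < x -> 0 < Ps x.
Proof.
  intros Hx. unfold Ps. pose proof (PP_pos x). pose proof (QQ_pos x).
  apply Rdiv_lt_0_compat; auto. apply Rmult_lt_0_compat; lra.
Qed.

Lemma gg_bounds x : 0 < x -> 0 <= gg x <= 2 * (nu + 1).
Proof.
  intros Hx.
  assert (Hz : 0 < x ^ 2 / 4) by (pose proof (pow_lt x 2 Hx); lra).
  pose proof (mom1 nu (x ^ 2 / 4) Hnu Hz) as M1. pose proof (mom2 nu (x ^ 2 / 4) Hnu Hz) as M2.
  fold (PP x) (QQ x) in M1, M2.
  pose proof (PP_pos x) as HP. pose proof (QQ_pos x) as HQ.
  set (q := QQ x / PP x).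
  assert (Hq : 0 < q) by (apply Rdiv_lt_0_compat; auto).
  assert (E : QQ x = q * PP x) by (unfold q; field; lra).
  rewrite E in M1, M2.
  assert (M1' : nu * q + x ^ 2 / 4 * q ^ 2 <= 1).
  { apply (Rmult_le_reg_r (PP x ^ 2)). apply pow_lt; auto. nra. }
  assert (M2' : 1 <= x ^ 2 / 4 * q ^ 2 + (nu + 1) * q).
  { apply (Rmult_le_reg_r (PP x ^ 2)). apply pow_lt; auto. nra. }
  assert (Eg : gg x = x * (1 - x * q / 2)) by (unfold gg, Ps, q; field; lra).
  rewrite Eg. set (t := x * q / 2).
  assert (Ht : 0 < t) by (unfold t; nra).
  assert (Ht2 : t ^ 2 = x ^ 2 / 4 * q ^ 2) by (unfold t; field).
  assert (Ht1 : t <= 1) by nra.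
  assert (Hxq : x * ((nu + 1) * q) = 2 * (nu + 1) * t) by (unfold t; field).
  split. nra.
  assert (1 - t <= (nu + 1) * q) by nra.
  assert ((nu + 1) * q * x <= 2 * (nu + 1)) by nra.
  nra.
Qed.

Definition hh x := gg x - (2 * nu + 1) / 2.
Definition rr x := (gg x ^ 2 - 2 * nu * gg x) / x.

Lemma hh_derive x : 0 < x -> is_derive hh x (-2 * hh x + rr x).
Proof.
  intros Hx. unfold hh. eapply deriv_eq.
  apply (is_derive_minus gg (fun _ => (2 * nu + 1) / 2)).
  apply gg_derive; auto. apply is_derive_const.
  unfold minus, plus, opp, zero; simpl. unfold rr.
  assert (E : Ps x = 1 - gg x / x) by (unfold gg; field; lra).
  rewrite E. field. lra.
Qed.

Lemma rr_bound x : 0 < x -> Rabs (rr x) <= (4 * (nu + 1) ^ 2 + 4 * nu * (nu + 1)) / x.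
Proof.
  intros Hx. unfold rr. pose proof (gg_bounds x Hx) as [H1 H2].
  rewrite Rabs_div by lra. rewrite (Rabs_right x) by lra.
  unfold Rdiv. apply Rmult_le_compat_r. left; apply Rinv_0_lt_compat; auto.
  apply Rabs_le. split; nra.
Qed.

Lemma lim_gg : is_lim gg p_infty ((2 * nu + 1) / 2).
Proof.
  pose proof (ode_lim hh rr _ hh_derive rr_bound) as H.
  apply (is_lim_ext (fun x => hh x + (2 * nu + 1) / 2)).
  intros y. unfold hh. ring.
  eapply is_lim_plus. exact H. apply is_lim_const.
  unfold is_Rbar_plus; simpl. f_equal. f_equal. ring.
Qed.
End ODE.


Lemma ln_lower t : 0 < t -> 1 - / t <= ln t.
Proof.
  intros Ht. pose proof (ln_le_m1 (/ t) (Rinv_0_lt_compat _ Ht)). rewrite ln_Rinv in H by auto. lra.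
Qed.

Lemma lim_eq f x (l l' : Rbar) : is_lim f x l -> l = l' -> is_lim f x l'.
Proof. intros H <-; exact H. Qed.

Lemma lim_inv_x : is_lim (fun x => / x) p_infty 0.
Proof.
  eapply lim_eq. apply (is_lim_inv (fun y => y)). apply is_lim_id. discriminate. reflexivity.
Qed.

Section Final.
Variable nu : R.
Hypothesis Hnu : 0 <= nu.
Let L := (2 * nu + 1) / 2.

Lemma L_pos : 0 < L.
Proof. unfold L; lra. Qed.

Lemma Ps_eq x : 0 < x -> Ps nu x = 1 - gg nu x * / x.
Proof. intros Hx. unfold gg. field. lra. Qed.

Lemma Ps_le1 x : 0 < x -> Ps nu x <= 1.
Proof.
  intros Hx. rewrite Ps_eq by auto. pose proof (gg_bounds nu Hnu x Hx).
  assert (0 <= gg nu x * / x) by (apply Rmult_le_pos; [lra| left; apply Rinv_0_lt_compat; auto]). lra.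
Qed.

Lemma lim_Ps1 : is_lim (fun x => 1 - gg nu x * / x) p_infty 1.
Proof.
  eapply is_lim_minus. apply is_lim_const.
  eapply is_lim_mult. apply (lim_gg nu Hnu). apply lim_inv_x. simpl; auto.
  simpl. unfold is_Rbar_minus, is_Rbar_plus. simpl. f_equal. f_equal. ring.
Qed.

Lemma ev_pos (P : R -> Prop) (M : R) : (forall x, M < x -> P x) -> Rbar_locally' p_infty P.
Proof. intros H. exists M. exact H. Qed.

Lemma lim_Ps : is_lim (Ps nu) p_infty 1.
Proof.
  apply (is_lim_ext_loc (fun x => 1 - gg nu x * / x)). apply (ev_pos _ 0).
  intros x Hx. rewrite Ps_eq; auto. apply lim_Ps1.
Qed.

Definition Df x := x * ln (Ps nu x).
Definition Nf x := x * ln (1 - 2 / x * Ps nu x).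

Lemma lim_Df : is_lim Df p_infty (- L).
Proof.
  apply (is_lim_le_le_loc (fun x => - (gg nu x / Ps nu x)) (fun x => - gg nu x)).
  - apply (ev_pos _ 0). intros x Hx. unfold Df.
    pose proof (Ps_pos nu Hnu x Hx) as HP.
    pose proof (ln_le_m1 _ HP). pose proof (ln_lower _ HP).
    assert (E : Ps nu x = 1 - gg nu x / x) by (unfold gg; field; lra).
    split.
    + apply (Rmult_le_compat_l x) in H0; [|lra].
      replace (x * (1 - / Ps nu x)) with (- (gg nu x / Ps nu x)) in H0. exact H0.
      unfold gg. field. lra.
    + apply (Rmult_le_compat_l x) in H; [|lra].
      replace (x * (Ps nu x - 1)) with (- gg nu x) in H. exact H.
      rewrite E. field. lra.
  - eapply lim_eq. apply is_lim_opp. eapply is_lim_div. apply (lim_gg nu Hnu). apply lim_Ps.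
    simpl. intro E; injection E; lra. simpl; auto. simpl. f_equal. unfold L. field.
  - eapply lim_eq. apply is_lim_opp. apply (lim_gg nu Hnu). reflexivity.
Qed.

Lemma lim_Nf : is_lim Nf p_infty (-2).
Proof.
  apply (is_lim_le_le_loc (fun x => - (2 * Ps nu x / (1 - 2 * Ps nu x * / x))) (fun x => - (2 * Ps nu x))).
  - apply (ev_pos _ 2). intros x Hx. unfold Nf.
    pose proof (Ps_pos nu Hnu x ltac:(lra)) as HP. pose proof (Ps_le1 x ltac:(lra)) as HP1.
    assert (Ht : 0 < 1 - 2 / x * Ps nu x).
    { assert (2 / x * Ps nu x < 1). { apply Rle_lt_trans with (2 / x). 
        rewrite <- (Rmult_1_r (2 / x)) at 2. apply Rmult_le_compat_l; [|lra].
        apply Rdiv_le_0_compat; lra.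
        apply (Rmult_lt_reg_r x); [lra|]. unfold Rdiv. rewrite Rmult_assoc, Rinv_l by lra. lra. }
      lra. }
    pose proof (ln_le_m1 _ Ht). pose proof (ln_lower _ Ht).
    split.
    + apply (Rmult_le_compat_l x) in H0; [|lra].
      replace (x * (1 - / (1 - 2 / x * Ps nu x))) with (- (2 * Ps nu x / (1 - 2 * Ps nu x * / x))) in H0. exact H0.
      field. split; [|lra]. replace (1 - 2 * Ps nu x * / x) with (1 - 2 / x * Ps nu x) by (field; lra). lra.
    + apply (Rmult_le_compat_l x) in H; [|lra].
      replace (x * (1 - 2 / x * Ps nu x - 1)) with (- (2 * Ps nu x)) in H. exact H.
      field. lra.
  - eapply lim_eq. apply is_lim_opp. eapply is_lim_div.
    + eapply is_lim_mult. apply is_lim_const. apply lim_Ps. simpl; auto.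
    + eapply is_lim_minus. apply is_lim_const.
      eapply is_lim_mult. eapply is_lim_mult. apply is_lim_const. apply lim_Ps. simpl; auto.
      apply lim_inv_x. simpl; auto.
      unfold is_Rbar_minus, is_Rbar_plus. simpl. reflexivity.
    + simpl. intro E; injection E. lra.
    + simpl; auto.
    + simpl. f_equal. field.
  - eapply lim_eq. apply is_lim_opp. eapply is_lim_mult. apply is_lim_const. apply lim_Ps. simpl; auto.
    simpl. f_equal. ring.
Qed.
End Final.


Theorem mainTheorem6 (nu : R) (hnu : 0 <= nu) :
  is_lim (lambda nu) p_infty (4 / (2 * nu + 1)).
Proof.
  apply (is_lim_ext_loc (fun x => Nf nu x / Df nu x)).
  - apply (ev_pos _ 0). intros x Hx. unfold lambda, Nf, Df.
    assert (E : Psi nu x = Ps nu x) by (rewrite Psi_eq by auto; reflexivity).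
    rewrite E. set (a := ln (1 - 2 / x * Ps nu x)). set (b := ln (Ps nu x)).
    unfold Rdiv. rewrite Rinv_mult.
    transitivity ((x * / x) * (a * / b)). ring.
    rewrite Rinv_r by lra. ring.
  - eapply lim_eq. eapply is_lim_div. apply (lim_Nf nu hnu). apply (lim_Df nu hnu).
    simpl. intro E; injection E; lra. simpl; auto.
    simpl. f_equal. field. lra.
Qed.
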